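(* For $n\ge1$ let $U_n(z)$ be the $n\times n$ matrix with entries $[U_n(z)]_{i,j}=z^{|i-j|}$, and let $\phi_n(x,z)=\det[U_n(z)-xI]$, with $\phi_0(x,z)=1$. Then $\phi_1(x,z)=1-x$ and for $n\ge2$ $$\phi_n(x,z)=\big(1-x-z^2(1+x)\big)\phi_{n-1}(x,z)-x^2z^2\phi_{n-2}(x,z).$$ *)

(* Defs.v *)
From mathcomp Require Import all_boot all_algebra.
Set Implicit Arguments. Unset Strict Implicit. Unset Printing Implicit Defensive.
Import GRing.Theory.
Local Open Scope ring_scope.

Definition Umx (R : comRingType) (n : nat) (z : R) : 'M[R]_n :=
  \matrix_(i < n, j < n) z ^+ `|(i : nat) - (j : nat)|%N.

(* phi_n(x,z) = det (U_n(z) - x I); for n = 0 the empty determinant is 1 *)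
Definition phi (R : comRingType) (n : nat) (x z : R) : R :=
  \det (Umx n z - x%:M).

(* Main.v *)
Require Import Defs.
From mathcomp Require Import all_boot all_algebra.
From mathcomp Require Import ring.
Set Implicit Arguments. Unset Strict Implicit.
Import GRing.Theory.
Local Open Scope ring_scope.

Definition aa (R : comRingType) (x z : R) (p q : nat) : R :=
  z ^+ `|p - q|%N - x *+ (p == q).
Definition cc (R : comRingType) (x z : R) (p q : nat) : R :=
  aa x z p q - z * (p == 0)%:R * aa x z 1 q.
Definition bb (R : comRingType) (x z : R) (p q : nat) : R :=
  cc x z p q - z * (q == 0)%:R * cc x z p 1.

Lemma distSS p q : `|p.+1 - q.+1|%N = `|p - q|%N.
Proof. exact: (distnDl 1 p q). Qed.

Definition o1 n : 'I_n.+2 := @Ordinal n.+2 1 isT.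
Definition EE (R : comRingType) n (z : R) : 'M[R]_n.+2 :=
  1%:M - z *: delta_mx 0 (o1 n).

Lemma EEmul (R : comRingType) n (z : R) (M : 'M[R]_n.+2) i j :
  (EE n z *m M) i j = M i j - z * (i == 0 :> nat)%:R * M (o1 n) j.
Proof.
rewrite /EE mulmxBl mul1mx -scalemxAl !mxE (bigD1 (o1 n)) //= big1 => [|k nk].
  by rewrite !mxE eqxx andbT addr0 mulrA; congr (_ - _ * _).
by rewrite !mxE (negbTE nk) andbF mul0r.
Qed.

Lemma detEE (R : comRingType) n (z : R) : \det (EE n z) = 1.
Proof.
rewrite -det_tr det_trig.
  by apply: big1 => i _; rewrite !mxE eqxx /= andbC; case: eqP => [->//|]; rewrite mulr0 subr0.
apply/is_trig_mxP => i j lij; rewrite !mxE.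
have -> : (j == i) = false by rewrite eq_sym; apply/negbTE; rewrite neq_ltn lij.
have -> : (j == 0 :> 'I_n.+2) = false by apply/negbTE; rewrite -lt0n; apply: leq_ltn_trans lij.
by rewrite /= mulr0 subr0.
Qed.

Lemma EEmulr (R : comRingType) n (z : R) (M : 'M[R]_n.+2) i j :
  (M *m (EE n z)^T) i j = M i j - z * (j == 0 :> nat)%:R * M i (o1 n).
Proof.
rewrite -[M *m _]trmxK trmx_mul trmxK mxE EEmul !mxE. reflexivity.
Qed.

Lemma o1eq n (k : 'I_n.+2) : (o1 n == k) = (1 == k :> nat). Proof. by []. Qed.
Lemma o1eq' n (k : 'I_n.+2) : (k == o1 n) = (k == 1 :> nat). Proof. by []. Qed.

Lemma Bentry (R : comRingType) n (x z : R) i j :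
  (EE n z *m (Umx n.+2 z - x%:M) *m (EE n z)^T) i j = bb x z i j.
Proof.
by rewrite EEmulr !EEmul !mxE /bb /cc /aa /= o1eq o1eq'.
Qed.
Section H.
Variables (R : comRingType) (x z : R).
Lemma b0k k : bb x z 0 k.+2 = 0.
Proof. rewrite /bb /cc /aa distSS !(distnC 0) !distn0 /= exprS. ring. Qed.
Lemma b00 : bb x z 0 0 = 1 - x - z ^+ 2 * (1 + x).
Proof. rewrite /bb /cc /aa /=. ring. Qed.
Lemma b01 : bb x z 0 1 = z * x.
Proof. rewrite /bb /cc /aa /=. ring. Qed.
Lemma bSS p q : bb x z p.+1 q.+1 = aa x z p q.
Proof. by rewrite /bb /cc /aa distSS eqSS /= !mulr0 !mul0r !subr0. Qed.
Lemma bk0 p : bb x z p.+1 0 = z * x * (p == 0)%:R.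
Proof.
rewrite /bb /cc /aa distSS !distn0 eqSS /= exprS -mulr_natr. ring. Qed.
End H.
Lemma lv1 n (k : 'I_n) : (lift (lift ord0 (@ord0 n)) (lift ord0 k) : nat) = k.+2.
Proof. by []. Qed.
Lemma lv0 n : (lift (lift ord0 (@ord0 n)) ord0 : nat) = 0%N.
Proof. by []. Qed.
Lemma rcE (R : comRingType) n (M : 'M[R]_n.+1) i0 j0 i j :
  (row' i0 (col' j0 M)) i j = M (lift i0 i) (lift j0 j).
Proof. by rewrite !mxE. Qed.

Lemma rec (R : comRingType) m (x z : R) :
  phi m.+2 x z = (1 - x - z ^+ 2 * (1 + x)) * phi m.+1 x z
                 - x ^+ 2 * z ^+ 2 * phi m x z.
Proof.
pose A := Umx m.+2 z - x%:M.
pose B := EE m z *m A *m (EE m z)^T.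
have dB : \det B = phi m.+2 x z.
  by rewrite /B !det_mulmx det_tr detEE mul1r mulr1.
rewrite -dB (expand_det_row B ord0) !big_ord_recl big1 ?addr0; last first.
  by move=> i _; rewrite /B Bentry !lift0 b0k mul0r.
rewrite /B !Bentry lift0 b00 b01 /cofactor /=.
have -> : row' ord0 (col' ord0 (EE m z *m A *m (EE m z)^T)) = Umx m.+1 z - x%:M.
  apply/matrixP => i j; rewrite rcE Bentry !lift0 bSS /aa !mxE //.
rewrite (expand_det_col (row' ord0 (col' (lift ord0 ord0) _)) ord0) big_ord_recl big1 ?addr0; last first.
  by move=> i _; rewrite rcE Bentry !lift0 lv0 bk0 /= mulr0 mul0r.
rewrite rcE Bentry lift0 lv0 bk0 /cofactor /=.
have -> : row' ord0 (col' ord0 (row' ord0 (col' (lift ord0 ord0) (EE m z *m A *m (EE m z)^T)))) = Umx m z - x%:M.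
  apply/matrixP => i j; rewrite rcE rcE Bentry !lift0 lv1 bSS /aa !mxE distSS eqSS //.
rewrite /phi /bump /= expr0 expr1. ring.
Qed.

Theorem lemma4p1 (R : comRingType) :
  (forall x z : R, phi 0 x z = 1) /\
  (forall x z : R, phi 1 x z = 1 - x) /\
  (forall (n : nat) (x z : R), (2 <= n)%N ->
     phi n x z = (1 - x - z ^+ 2 * (1 + x)) * phi n.-1 x z
                 - x ^+ 2 * z ^+ 2 * phi n.-2 x z).
Proof.
split; first by move=> x z; rewrite /phi det_mx00.
split; first by move=> x z; rewrite /phi det_mx11 !mxE /= expr0 mulr1n.
by case=> [|[|m]] // x z _; rewrite rec.
Qed.
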